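(* Let $\gamma$ be a $q$-curve with winding number $k$. Then: (a) if $q>1$, then $k\neq0$; (b) $q$ and $k$ are relatively prime; (c) if $\zeta$ is another $q$-curve (same $q$) whose point set does not intersect that of $\gamma$, then $\zeta$ has the same winding number $k$.
   Context: $\mathbb{T}^1=\mathbb{R}/\mathbb{Z}$, $\mathbb{T}^2=\mathbb{T}^1\times\mathbb{T}^1$. Let $q\in\mathbb{N}$. A $q$-curve is given by a continuous function $\hat\gamma:\mathbb{R}\to\mathbb{R}$ such that for some $k\in\mathbb{Z}$: $\hat\gamma(\hat\theta+q)-\hat\gamma(\hat\theta)=k$ for all $\hat\theta\in\mathbb{R}$, and $\hat\gamma(\hat\theta+l)-\hat\gamma(\hat\theta)\notin\mathbb{Z}$ for all $\hat\theta\in\mathbb{R}$ and all $1\le l<q$. The $q$-curve itself is the $q$-valued graph $\gamma=(\gamma_1,\dots,\gamma_q)$ on $\mathbb{T}^1$, $\gamma_i(\theta)=\hat\gamma(\hat\theta+i-1)\bmod1$ where $\hat\theta\in[0,1)$ represents $\theta$; equivalently its point set is $\Gamma=\{(\hat\theta\bmod1,\hat\gamma(\hat\theta)\bmod1):\hat\theta\in\mathbb{R}\}\subseteq\mathbb{T}^2$. Any such $\hat\gamma$ projecting onto $\Gamma$ is called a lift of $\gamma$, and the integer $k$ (independent of the lift) is the winding number of $\gamma$. *)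

(* Defs.v *)
From Stdlib Require Import Reals ZArith.
Open Scope R_scope.

Definition is_int (x : R) : Prop := exists m : Z, x = IZR m.

Definition is_qcurve_lift (q : nat) (k : Z) (g : R -> R) : Prop :=
  (1 <= q)%nat /\
  continuity g /\
  (forall t : R, g (t + INR q) - g t = IZR k) /\
  (forall (t : R) (l : nat), (1 <= l)%nat -> (l < q)%nat -> ~ is_int (g (t + INR l) - g t)).

(* The point sets {(t mod 1, g t mod 1)} and {(s mod 1, z s mod 1)} in T^2
   are disjoint: no t, s with t ≡ s and g t ≡ z s (mod 1). *)
Definition point_sets_disjoint (g z : R -> R) : Prop :=
  forall t s : R, ~ (is_int (t - s) /\ is_int (g t - z s)).

(* Main.v *)
Require Import Defs.
From Stdlib Require Import Reals ZArith Lra Lia Psatz.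
Open Scope R_scope.

Lemma cross (f : R -> R) a b c : continuity f -> f a < c -> c < f b ->
  exists x, f x = c.
Proof.
  intros Hf Ha Hb.
  assert (Hc : continuity (fun _ : R => c)) by
    (apply continuity_const; intros ? ?; reflexivity).
  destruct (Rtotal_order a b) as [Hab|[Hab|Hab]].
  - destruct (IVT (fun x => f x - c) a b (continuity_minus _ _ Hf Hc) Hab)
      as [x [_ Hx]]; simpl; try lra.
    exists x; lra.
  - subst; lra.
  - destruct (IVT (fun x => c - f x) b a (continuity_minus _ _ Hc Hf) Hab)
      as [x [_ Hx]]; simpl; try lra.
    exists x; lra.
Qed.

Lemma between (f : R -> R) : continuity f -> (forall x, ~ is_int (f x)) ->
  forall x, IZR (up (f 0)) - 1 < f x < IZR (up (f 0)).
Proof.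
  intros Hf Hn x.
  destruct (archimed (f 0)) as [H1 H2].
  assert (H0 : IZR (up (f 0)) - 1 < f 0).
  { destruct (Req_dec (f 0) (IZR (Z.sub (up (f 0)) 1))) as [E|E].
    - exfalso; apply (Hn R0); exists (Z.sub (up (f 0)) 1); exact E.
    - rewrite minus_IZR in E; lra. }
  split.
  - destruct (Rlt_le_dec (IZR (up (f 0)) - 1) (f x)) as [h|h]; auto.
    exfalso.
    destruct (Req_dec (f x) (IZR (Z.sub (up (f 0)) 1))) as [E|E].
    + apply (Hn x); exists (Z.sub (up (f 0)) 1); exact E.
    + rewrite minus_IZR in E.
      destruct (cross f x 0 (IZR (Z.sub (up (f 0)) 1)) Hf) as [y Hy];
        try (rewrite minus_IZR; lra).
      apply (Hn y); eexists; exact Hy.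
  - destruct (Rlt_le_dec (f x) (IZR (up (f 0)))) as [h|h]; auto.
    exfalso.
    destruct (Req_dec (f x) (IZR (up (f 0)))) as [E|E].
    + apply (Hn x); eexists; exact E.
    + destruct (cross f 0 x (IZR (up (f 0))) Hf) as [y Hy]; try lra.
      apply (Hn y); eexists; exact Hy.
Qed.

Lemma gcd_part q k g : is_qcurve_lift q k g -> Z.gcd (Z.of_nat q) k = 1%Z.
Proof.
  intros [Hq [Hc [Hper Hnot]]].
  set (d := Z.gcd (Z.of_nat q) k).
  destruct (Z.eq_dec d 1) as [E|E]; [exact E|exfalso].
  assert (Hd0 : (0 <= d)%Z) by apply Z.gcd_nonneg.
  destruct (Z.gcd_divide_l (Z.of_nat q) k) as [L HL].
  destruct (Z.gcd_divide_r (Z.of_nat q) k) as [c Hk].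
  fold d in HL, Hk.
  assert (Hdz : d <> 0%Z).
  { intro E0. unfold d in E0. apply Z.gcd_eq_0_l in E0. lia. }
  clearbody d.
  assert (Hd2 : (2 <= d)%Z) by lia.
  assert (HL1 : (1 <= L)%Z) by nia.
  assert (HLq : (L < Z.of_nat q)%Z).
  { rewrite HL. nia. }
  set (l := Z.to_nat L).
  assert (Hl : INR l = IZR L) by (unfold l; rewrite INR_IZR_INZ, Z2Nat.id; [reflexivity|lia]).
  set (f := fun t => g (t + INR l) - g t).
  assert (Hfc : continuity f).
  { unfold f. apply continuity_minus; auto.
    intro x. apply continuity_pt_comp with (f1 := fun t => t + INR l); auto.
    apply continuity_pt_plus; [apply derivable_continuous_pt, derivable_pt_id | apply continuity_pt_const; intros ? ?; reflexivity]. }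
  assert (Hfn : forall x, ~ is_int (f x)).
  { intro x; unfold f; apply Hnot; unfold l; lia. }
  pose proof (between f Hfc Hfn) as B.
  set (n := up (f 0)) in B.
  assert (Ind : forall j : nat, INR (S j) * (IZR n - 1) < g (INR (S j) * INR l) - g 0
                                < INR (S j) * IZR n).
  { induction j.
    - simpl. specialize (B 0). unfold f in B. rewrite Rplus_0_l in B.
      replace (1 * INR l) with (INR l) by ring. lra.
    - specialize (B (INR (S j) * INR l)). unfold f in B.
      replace (INR (S (S j)) * INR l) with (INR (S j) * INR l + INR l)
        by (rewrite (S_INR (S j)); ring).
      rewrite (S_INR (S j)). lra. }
  set (dn := Z.to_nat d).
  assert (Hdn : INR dn = IZR d) by (unfold dn; rewrite INR_IZR_INZ, Z2Nat.id; [reflexivity|lia]).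
  destruct dn as [|j] eqn:Edn; [unfold dn in Edn; lia|].
  specialize (Ind j). rewrite Hdn, Hl, <- mult_IZR, Z.mul_comm, <- HL in Ind.
  rewrite <- INR_IZR_INZ in Ind.
  specialize (Hper 0). rewrite Rplus_0_l in Hper. rewrite Hper, Hk in Ind.
  destruct Ind as [I1 I2].
  rewrite <- minus_IZR, <- !mult_IZR in I1. rewrite <- mult_IZR in I2.
  apply lt_IZR in I1. apply lt_IZR in I2. idtac.
  assert (X1 : (n - 1 < c)%Z) by (apply (Z.mul_lt_mono_pos_l d); lia).
  assert (X2 : (c < n)%Z) by (apply (Z.mul_lt_mono_pos_l d); lia).
  lia.
Qed.

Theorem mainTheorem2 (q : nat) (k : Z) (g : R -> R) :
  is_qcurve_lift q k g ->
  ((1 < q)%nat -> k <> 0%Z) /\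
  Z.gcd (Z.of_nat q) k = 1%Z /\
  (forall (k' : Z) (z : R -> R),
      is_qcurve_lift q k' z -> point_sets_disjoint g z -> k' = k).
Proof.
  intros H. pose proof (gcd_part q k g H) as G.
  split; [|split; [exact G|]].
  - intros Hq E. subst. rewrite Z.gcd_0_r in G. lia.
  - intros k' z Hz Hdis.
    destruct H as [_ [Hgc [Hgp _]]]. destruct Hz as [_ [Hzc [Hzp _]]].
    set (D := fun s => g s - z s).
    assert (Dc : continuity D) by (apply continuity_minus; auto).
    assert (Dn : forall x, ~ is_int (D x)).
    { intros x Hi. apply (Hdis x x). split; [exists 0%Z; simpl; ring | exact Hi]. }
    pose proof (between D Dc Dn) as B.
    pose proof (B 0) as B0. pose proof (B (0 + INR q)) as B1.
    unfold D in B0, B1. specialize (Hgp 0). specialize (Hzp 0).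
    assert (A : -1 < IZR (k - k') < 1) by (rewrite minus_IZR; lra).
    destruct A as [A1 A2]. apply lt_IZR in A1. apply lt_IZR in A2. lia.
Qed.
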